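(* Let $\{S_i\}_{i\in\mathcal I}$ be a finite family of contracting similarities of $\mathbb{R}^d$, written $S_i(x)=c_iM_i(x)+b_i$ with $c_i\in(0,1)$, $M_i$ orthogonal and $b_i\in\mathbb{R}^d$, and let $T_i(x)=c_iM_i(x)$. Let $\gamma\ge0$ be defined by $\limsup_{k\to\infty}|\{T_I: I\in\mathcal I_k\}|^{1/k}=2^\gamma$. If $d=1$ or $d=2$, or if the matrices $M_i$ ($i\in\mathcal I$) commute, then $\gamma=0$.
   Context: $\mathcal I^*$ is the set of finite non-empty words over $\mathcal I$; for $I=(i_1,\dots,i_k)$, $T_I=T_{i_1}\circ\cdots\circ T_{i_k}$ and $c_I=c_{i_1}\cdots c_{i_k}$. For $k\ge0$, $\mathcal I_k=\{I\in\mathcal I^*: 2^{-k-1}<c_I\le2^{-k}\}$. *)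

(* Defs.v *)
From HB Require Import structures.
From mathcomp Require Import all_boot all_order all_algebra.
From mathcomp Require Import all_classical all_reals all_analysis.
From mathcomp Require Import finmap.
Set Implicit Arguments. Unset Strict Implicit. Unset Printing Implicit Defensive.
Import Order.TTheory GRing.Theory Num.Theory.
Local Open Scope classical_set_scope.
Local Open Scope ring_scope.

Definition orthogonal_mx (R : realType) (d : nat) (M : 'M[R]_d) : Prop :=
  M *m M^T = 1%:M.

Definition word_ratio (R : realType) (I : finType) (c : I -> R) (w : seq I) : R :=
  \prod_(i <- w) c i.

(* Matrix of T_I = T_{i1} o ... o T_{ik}, where T_i x = c_i M_i x *)
Definition word_map (R : realType) (d : nat) (I : finType) (c : I -> R)
    (M : I -> 'M[R]_d) (w : seq I) : 'M[R]_d :=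
  foldr (fun i A => (c i *: M i) *m A) 1%:M w.

Definition words_level (R : realType) (I : finType) (c : I -> R) (k : nat)
    : set (seq I) :=
  [set w | w != [::] /\ (2%:R ^- k.+1 < word_ratio c w) /\ (word_ratio c w <= 2%:R ^- k)].

(* number of distinct maps T_I with I in \mathcal I_k (this set is finite) *)
Definition num_maps_level (R : realType) (d : nat) (I : finType) (c : I -> R)
    (M : I -> 'M[R]_d) (k : nat) : nat :=
  #|` fset_set (word_map c M @` words_level c k)|.

(* Main.v *)
Require Import Defs.
From HB Require Import structures.
From mathcomp Require Import all_boot all_order all_algebra.
From mathcomp Require Import all_classical all_reals all_analysis.
From mathcomp Require Import finmap.
From mathcomp Require Import ring lra zify.
Set Implicit Arguments. Unset Strict Implicit. Unset Printing Implicit Defensive.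
Import Order.TTheory GRing.Theory Num.Theory.
Local Open Scope classical_set_scope.
Local Open Scope ring_scope.

Definition prodf (R : realType) (n : nat) (T : Type) (f : T -> 'M[R]_n) (s : seq T) : 'M[R]_n :=
  foldr (fun x A => f x *m A) 1%:M s.

Lemma prodf_cat (R : realType) n (T : Type) (f : T -> 'M[R]_n) s1 s2 :
  prodf f (s1 ++ s2) = prodf f s1 *m prodf f s2.
Proof. by elim: s1 => [|x s IH] /=; rewrite ?mul1mx // IH mulmxA. Qed.

Lemma prodf_comm1 (R : realType) n (T : Type) (f : T -> 'M[R]_n)
  (hf : forall x y, f x *m f y = f y *m f x) x s :
  f x *m prodf f s = prodf f s *m f x.
Proof.
elim: s => [|y s IH] /=; first by rewrite mulmx1 mul1mx.
by rewrite mulmxA hf -!mulmxA IH.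
Qed.

Lemma prodf_perm (R : realType) n (T : eqType) (f : T -> 'M[R]_n)
  (hf : forall x y, f x *m f y = f y *m f x) s1 s2 :
  perm_eq s1 s2 -> prodf f s1 = prodf f s2.
Proof.
elim: s1 s2 => [|x s1 IH] s2.
  by rewrite perm_sym => /perm_nilP ->.
move=> hp; have hx : x \in s2 by rewrite -(perm_mem hp) mem_head.
move: hp; case/splitPr: hx => s3 s4 hp.
have hp' : perm_eq s1 (s3 ++ s4).
  rewrite -(perm_cons x); apply: (perm_trans hp).
  by apply/permP => a; rewrite /= !count_cat /= addnCA.
rewrite /= (IH _ hp') !prodf_cat /=.
by rewrite !mulmxA prodf_comm1.
Qed.
Definition i0 : 'I_2 := @Ordinal 2 0 erefl.
Definition i1 : 'I_2 := @Ordinal 2 1 erefl.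

Lemma ord2P (i : 'I_2) : i = i0 \/ i = i1.
Proof. by case: i => [[|[|k]] h]; [left|right|]; try apply/val_inj. Qed.

Lemma mul2E (R : realType) (A B : 'M[R]_2) i j :
  (A *m B) i j = A i i0 * B i0 j + A i i1 * B i1 j.
Proof.
rewrite mxE !big_ord_recl big_ord0 addr0.
have -> : lift ord0 ord0 = i1 by apply: val_inj.
have -> : ord0 = i0 by apply: val_inj.
by [].
Qed.

Definition is_rot (R : realType) (A : 'M[R]_2) :=
  A i1 i1 = A i0 i0 /\ A i0 i1 = - A i1 i0.

Definition Fm (R : realType) : 'M[R]_2 :=
  \matrix_(i, j) (if i == j then (if i == i0 then 1 else -1) else 0).

Lemma FmE (R : realType) :
  [/\ Fm R i0 i0 = 1, Fm R i0 i1 = 0, Fm R i1 i0 = 0 & Fm R i1 i1 = -1].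
Proof. by rewrite !mxE. Qed.

Lemma FF (R : realType) : Fm R *m Fm R = 1%:M.
Proof.
have [a b c e] := FmE R.
apply/matrixP => i j; rewrite mul2E !mxE.
by case: (ord2P i) => ->; case: (ord2P j) => ->; rewrite /= ?a ?b ?c ?e /=; ring.
Qed.

Lemma rot_comm (R : realType) (A B : 'M[R]_2) : is_rot A -> is_rot B -> A *m B = B *m A.
Proof.
move=> [a1 a2] [b1 b2]; apply/matrixP => i j; rewrite !mul2E.
by case: (ord2P i) => ->; case: (ord2P j) => ->; rewrite ?a1 ?a2 ?b1 ?b2; ring.
Qed.

Lemma rot_conj (R : realType) (A : 'M[R]_2) : is_rot A -> is_rot (Fm R *m A *m Fm R).
Proof.
have [a b c e] := FmE R.
move=> [a1 a2]; split; rewrite !mul2E ?a ?b ?c ?e ?a1 ?a2; ring.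
Qed.

Lemma orth_aux (R : realType) (p q r t : R) :
  p * p + q * q = 1 -> p * r + q * t = 0 -> r * r + t * t = 1 ->
  r = - (p * t - q * r) * q /\ t = (p * t - q * r) * p /\
  (p * t - q * r = 1 \/ p * t - q * r = -1).
Proof.
move=> e00 e01 e11.
have hr : r = - (p * t - q * r) * q.
  have H : r + (p * t - q * r) * q = p * (p * r + q * t) + r * (1 - (p * p + q * q)) by ring.
  by apply/eqP; rewrite -subr_eq0 mulNr opprK H e01 e00; apply/eqP; ring.
have ht : t = (p * t - q * r) * p.
  have H : t - (p * t - q * r) * p = q * (p * r + q * t) + t * (1 - (p * p + q * q)) by ring.
  by apply/eqP; rewrite -subr_eq0 H e01 e00; apply/eqP; ring.
split => //; split => //.
have hl : (p * t - q * r) ^+ 2 == 1.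
  move: (p * t - q * r) hr ht => l hr ht.
  have key : l ^+ 2 - 1 = ((- l * q) * (- l * q) + (l * p) * (l * p) - 1) - l ^+ 2 * (p * p + q * q - 1) by ring.
  by rewrite -subr_eq0 key -hr -ht e00 e11 !subrr mulr0 subrr.
by rewrite sqrf_eq1 in hl; case/orP: hl => /eqP hl; [left|right].
Qed.

Lemma orth_rot (R : realType) (A : 'M[R]_2) : orthogonal_mx A ->
  is_rot A \/ is_rot (A *m Fm R).
Proof.
move=> h; rewrite /orthogonal_mx in h.
have e00 := congr1 (fun B : 'M[R]_2 => B i0 i0) h.
have e01 := congr1 (fun B : 'M[R]_2 => B i0 i1) h.
have e11 := congr1 (fun B : 'M[R]_2 => B i1 i1) h.
rewrite /= mul2E !mxE /= in e00.
rewrite /= mul2E !mxE /= in e01.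
rewrite /= mul2E !mxE /= in e11.
have [hr [ht [hl|hl]]] := orth_aux e00 e01 e11; rewrite hl in hr ht.
  by left; split; rewrite ?ht ?hr; ring.
right; have [a b c e] := FmE R.
by split; rewrite !mul2E a b c e ?ht ?hr; ring.
Qed.

Lemma word_mapE (R : realType) d (I : finType) (c : I -> R) (M : I -> 'M[R]_d) w :
  word_map c M w = word_ratio c w *: prodf M w.
Proof.
elim: w => [|i w IH] /=; first by rewrite /word_ratio big_nil scale1r.
by rewrite /word_ratio big_cons -/(word_ratio c w) IH -scalemxAl -scalemxAr scalerA.
Qed.

Definition good_key (R : realType) d (I : finType) (M : I -> 'M[R]_d)
  (Q : seq I -> seq (I * bool)) :=
  (forall w, map fst (Q w) = w) /\
  (forall w1 w2, perm_eq (Q w1) (Q w2) -> prodf M w1 = prodf M w2).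

Lemma key_comm (R : realType) d (I : finType) (M : I -> 'M[R]_d)
  (hc : forall i j, M i *m M j = M j *m M i) :
  exists Q, good_key M Q.
Proof.
exists (map (fun i => (i, false))); split.
  by move=> w; rewrite -map_comp map_id.
move=> w1 w2 /(perm_map fst); rewrite -!map_comp !map_id => hp.
exact: prodf_perm hc _ _ hp.
Qed.

Lemma comm11 (R : realType) (A B : 'M[R]_1) : A *m B = B *m A.
Proof. by rewrite [A]mx11_scalar [B]mx11_scalar -!scalar_mxM mulrC. Qed.

Definition rotb (R : realType) (A : 'M[R]_2) :=
  (A i1 i1 == A i0 i0) && (A i0 i1 == - A i1 i0).

Definition Fp (R : realType) (b : bool) : 'M[R]_2 := if b then Fm R else 1%:M.

Fixpoint Qf (I : Type) (e : I -> bool) (p : bool) (w : seq I) : seq (I * bool) :=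
  if w is i :: w' then (i, p) :: Qf e (p (+) e i) w' else [::].

Lemma Qf_fst (I : Type) (e : I -> bool) p w : map fst (Qf e p w) = w.
Proof. by elim: w p => [|i w IH] p //=; rewrite IH. Qed.

Lemma FpM (R : realType) p q : Fp R p *m Fp R q = Fp R (p (+) q).
Proof. by case: p; case: q; rewrite /= ?FF ?mulmx1 ?mul1mx. Qed.

Lemma key_2 (R : realType) (I : finType) (M : I -> 'M[R]_2)
  (hM : forall i, orthogonal_mx (M i)) :
  exists Q, good_key M Q.
Proof.
pose e i := ~~ rotb (M i).
pose Rm i := if rotb (M i) then M i else M i *m Fm R.
have hR : forall i, is_rot (Rm i).
  move=> i; rewrite /Rm; case hb: (rotb (M i)).
    by move: hb => /andP[/eqP ? /eqP ?].
  case: (orth_rot (hM i)) => // -[h1 h2].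
  by move: hb; rewrite /rotb h1 h2 !eqxx.
have hMR : forall i, M i = Rm i *m Fp R (e i).
  move=> i; rewrite /Rm /e; case: (rotb (M i)) => /=; first by rewrite mulmx1.
  by rewrite -mulmxA FF mulmx1.
pose f (x : I * bool) := if x.2 then Fm R *m Rm x.1 *m Fm R else Rm x.1.
have hf : forall x, is_rot (f x).
  by move=> [i []]; rewrite /f /=; [apply: rot_conj|]; apply: hR.
have hfc : forall x y, f x *m f y = f y *m f x by move=> x y; apply: rot_comm.
have hFR : forall i p, Fp R p *m Rm i = f (i, p) *m Fp R p.
  move=> i [] /=; rewrite /f /=; last by rewrite mul1mx mulmx1.
  by rewrite -!mulmxA FF mulmx1.
have claim : forall w p, Fp R p *m prodf M w = prodf f (Qf e p w) *m Fp R (p (+) odd (count e w)).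
  elim=> [|i w IH] p /=; first by rewrite addbF mulmx1 mul1mx.
  rewrite hMR !mulmxA hFR -(mulmxA (f (i, p))) FpM -mulmxA IH !mulmxA.
  by rewrite oddD oddb addbA.
have claim0 : forall w, prodf M w = prodf f (Qf e false w) *m Fp R (odd (count e w)).
  by move=> w; rewrite -[LHS]mul1mx -[1%:M]/(Fp R false) claim.
exists (Qf e false); split; first by move=> w; apply: Qf_fst.
move=> w1 w2 hp; rewrite !claim0 (prodf_perm hfc hp).
have := perm_map fst hp; rewrite !Qf_fst => /permP ->.
by [].
Qed.

Lemma key_all (R : realType) d (I : finType) (M : I -> 'M[R]_d)
  (hM : forall i, orthogonal_mx (M i))
  (hcase : d = 1%N \/ d = 2%N \/ (forall i j, M i *m M j = M j *m M i)) :
  exists Q, good_key M Q.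
Proof.
case: hcase => [hd|[hd|hc]]; last exact: key_comm.
  by subst d; apply: key_comm => i j; apply: comm11.
by subst d; apply: key_2.
Qed.

Lemma count_le (R : realType) d (I : finType) (c : I -> R) (M : I -> 'M[R]_d)
  Q (hQ : good_key M Q) (S : set (seq I)) (L : nat)
  (hS : forall w, S w -> (size w <= L)%N) :
  (word_map c M @` S #<= `I_(L.+1 ^ #|{: I * bool}|))%card.
Proof.
have [hQ1 hQ2] := hQ.
pose K := {ffun I * bool -> 'I_L.+1}.
pose key (w : seq I) : K := [ffun x => inord (count_mem x (Q w))].
pose G (k : K) := word_map c M (xget [::] [set w | S w /\ key w = k]).
pose G' (j : 'I_#|{:K}|) := G (enum_val j).
have sub : (word_map c M @` S `<=` G' @` setT)%classic.
  move=> _ [w Sw <-]; exists (enum_rank (key w)) => //.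
  rewrite /G' enum_rankK /G.
  have := @xgetPex _ [::] [set w' | S w' /\ key w' = key w] (ex_intro _ w (conj Sw erefl)).
  set w' := xget _ _ ; move=> [Sw' hk].
  have hp : perm_eq (Q w') (Q w).
    apply/allP => x _.
    have := congr1 (fun f : K => val (f x)) hk; rewrite /key !ffunE /=.
    have hsz : forall u, S u -> (count_mem x (Q u) <= L)%N.
      move=> u Su; apply: leq_trans (count_size _ _) _.
      by rewrite -(size_map fst) hQ1 hS.
    by rewrite !inordK ?ltnS ?hsz // => ->.
  have hp' : perm_eq w' w by have := perm_map fst hp; rewrite !hQ1.
  by rewrite !word_mapE (hQ2 _ _ hp) /word_ratio (perm_big _ hp').
have -> : (L.+1 ^ #|{: I * bool}|)%N = #|{:K}| by rewrite card_ffun card_ord.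
apply: card_le_trans (subset_card_le sub) _.
  apply: card_le_trans (card_image_le _ _) _.
by case/card_eqPle: (card_esym (@card_II #|{:K}|)).
Qed.

Lemma geo_le (R : realType) (z : R) : 0 <= z < 1 ->
  exists q : nat, z ^+ q <= 2%:R ^-1 /\ (0 < q)%N.
Proof.
move=> /andP[z0 z1].
have hz : `|z| < 1 by rewrite ger0_norm.
have h2 : (0 : R) < 2%:R^-1 by rewrite invr_gt0 ltr0n.
have [N _ HN] := @cvgr_dist_lt _ _ _ _ _ _ _ (cvg_expr hz) _ h2.
exists N.+1; split => //.
have := HN N.+1 (leqnSn N); rewrite /= sub0r normrN ger0_norm ?exprn_ge0 //.
exact: ltW.
Qed.

Lemma level_exists (R : realType) (x : R) (n : nat) : 0 < x -> x <= 2%:R ^- n ->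
  exists k, (n <= k)%N /\ 2%:R ^- k.+1 < x /\ x <= 2%:R ^- k.
Proof.
move=> x0 xn.
have [m hm] : exists m, 2%:R ^- (n + m) < x.
  exists (Num.Def.archi_bound x^-1).
  have := upper_nthrootP (x := x^-1) (i := (n + Num.Def.archi_bound x^-1)%N) (leq_addl _ _).
  by rewrite -[X in _ -> _ < X]invrK ltf_pV2 // ?posrE ?invr_gt0 // exprn_gt0.
elim: m n xn hm => [|m IH] n xn hm.
  by rewrite addn0 in hm; have := lt_le_trans hm xn; rewrite ltxx.
case: (ltP (2%:R ^- n.+1) x) => h.
  by exists n.
have [|k [hk1 hk2]] := IH n.+1 h; first by rewrite addSnnS.
by exists k; split => //; apply: ltnW.
Qed.

Lemma root_le (R : realType) (N k : nat) (e : R) : (0 < k)%N -> 0 < e ->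
  N%:R <= (1 + e) ^+ k -> N%:R `^ (k%:R)^-1 <= 1 + e.
Proof.
move=> k0 e0 h.
have he : 0 <= 1 + e by rewrite addr_ge0 // ltW.
have := @ge0_ler_powR R (k%:R)^-1 _ (N%:R) ((1 + e) ^+ k) _ _ h.
rewrite -powR_mulrn //.
rewrite -powRrM mulfV ?pnatr_eq0 -?lt0n // powRr1 //.
by apply; rewrite ?invr_ge0 ?ler0n ?nnegrE ?ler0n ?exprn_ge0 ?powR_ge0.
Qed.

Lemma root_ge1 (R : realType) (N k : nat) : (1 <= N)%N -> (1 : R) <= N%:R `^ (k%:R)^-1.
Proof.
move=> hN.
have := @ge0_ler_powR R (k%:R)^-1 _ 1 (N%:R) _ _ _.
rewrite powR1; apply; rewrite ?invr_ge0 ?ler0n ?nnegrE ?ler0n ?ler1n //.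
Qed.

Lemma poly_exp (R : realType) (a m : nat) (e : R) : (0 < a)%N -> 0 < e ->
  exists K, forall k, (K <= k)%N -> (((a * k.+1) ^ m)%N%:R : R) <= (1 + e) ^+ k.
Proof.
move=> a0 e0.
set d := ln (1 + e).
have d0 : 0 < d by apply: ln_gt0; rewrite ltrDl.
set C := (8 * m%:R ^+ 2 * a%:R) / d ^+ 2.
exists (Num.Def.trunc C).+1 => k hk.
have kC : C < k%:R by apply: lt_le_trans (truncnS_gt C) _; rewrite ler_nat.
have k1 : (1 <= k)%N by apply: leq_trans hk.
have dk : 8 * m%:R ^+ 2 * a%:R < d ^+ 2 * k%:R.
  by move: kC; rewrite /C ltr_pdivrMr ?exprn_gt0 // [k%:R * _]mulrC.
clearbody C.
set y : R := (a * k.+1)%N%:R.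
have y0 : 0 < y by rewrite ltr0n muln_gt0 a0.
have yk : y <= 2 * a%:R * k%:R.
  rewrite /y -natrM -natrM ler_nat.
  nia.
have e1 : 0 < 1 + e by rewrite addr_gt0.
rewrite natrX -ler_ln ?posrE ?exprn_gt0 // !lnXn // -/d -/y.
clearbody d y.
have [s [s0 hs]] : exists s, 0 < s /\ s ^+ 2 = y.
  by exists (Num.sqrt y); rewrite sqrtr_gt0 sqr_sqrtr // ltW.
have lny : ln y <= s * 2.
  rewrite -hs lnXn // mulr_natr !mulr2n.
  by apply: lerD; apply: ltW (ln_sublinear s0).
rewrite -[ln y *+ m]mulr_natr -[d *+ k]mulr_natr.
have m0 : (0 : R) <= m%:R by apply: ler0n.
apply: le_trans (_ : s * 2 * m%:R <= _); first by apply: ler_wpM2r.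
have kr : (1 : R) <= k%:R by rewrite ler1n.
have A0 : (0 : R) <= a%:R by apply: ler0n.
have sq : (s * 2 * m%:R) ^+ 2 <= (d * k%:R) ^+ 2.
  have -> : (s * 2 * m%:R) ^+ 2 = 4 * y * m%:R ^+ 2 by rewrite -hs; ring.
  have -> : (d * k%:R) ^+ 2 = (d ^+ 2 * k%:R) * k%:R by ring.
  apply: (@le_trans _ _ (4 * (2 * a%:R * k%:R) * m%:R ^+ 2)).
    by apply: ler_wpM2r; rewrite ?exprn_ge0 //; apply: ler_wpM2l.
  have -> : 4 * (2 * a%:R * k%:R) * m%:R ^+ 2 = (8 * m%:R ^+ 2 * a%:R) * k%:R :> R by ring.
  by apply: ler_wpM2r => //; apply: ltW.
have X0 : 0 <= s * 2 * m%:R by rewrite !mulr_ge0 // ltW.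
have Y0 : 0 <= d * k%:R by rewrite mulr_ge0 // ltW.
by rewrite -(@ler_pXn2r _ 2) ?nnegrE.
Qed.

Lemma cmax (R : realType) (I : finType) (c : I -> R) (hc : forall i, 0 < c i < 1) :
  exists cm : R, (0 <= cm < 1) /\ forall i, c i <= cm.
Proof.
suff: forall s : seq I, exists cm : R, (0 <= cm < 1) /\ forall i, i \in s -> c i <= cm.
  by move=> /(_ (enum I)) [cm [h1 h2]]; exists cm; split => // i; apply: h2; rewrite mem_enum.
elim=> [|j s [cm [/andP[h0 h1] h2]]]; first by exists 0; rewrite lexx ltr01.
have [cj0 cj1] := andP (hc j).
exists (Num.max (c j) cm); split.
  by rewrite le_max h0 orbT gt_max cj1 h1.
move=> i; rewrite inE => /orP[/eqP ->|his]; rewrite le_max ?lexx //.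
by rewrite h2 ?orbT.
Qed.

Lemma ratio_le (R : realType) (I : finType) (c : I -> R) (cm : R)
  (hc : forall i, 0 < c i < 1) (hcm : forall i, c i <= cm) (w : seq I) :
  0 <= word_ratio c w <= cm ^+ size w.
Proof.
elim: w => [|i w /andP[h0 h1]]; first by rewrite /word_ratio big_nil lexx ler01.
have [ci0 ci1] := andP (hc i).
rewrite /word_ratio big_cons -/(word_ratio c w) /= exprS.
rewrite mulr_ge0 ?(ltW ci0) //=.
by apply: ler_pM => //; apply: ltW.
Qed.

Lemma ratio_nseq (R : realType) (I : finType) (c : I -> R) i j :
  word_ratio c (nseq j i) = c i ^+ j.
Proof.
elim: j => [|j IH]; first by rewrite /word_ratio big_nil.
by rewrite /word_ratio /= big_cons -/(word_ratio c _) IH exprS.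
Qed.

Lemma size_level (R : realType) (I : finType) (c : I -> R) (cm : R) (q : nat)
  (hc : forall i, 0 < c i < 1) (hcm : forall i, c i <= cm) (cm0 : 0 <= cm) (cm1 : cm <= 1)
  (hq : cm ^+ q <= 2%:R ^-1) k w :
  words_level c k w -> (size w <= q * k.+1)%N.
Proof.
move=> [_ [h1 _]]; rewrite leqNgt; apply/negP => hs.
have /andP[_ h2] := ratio_le hc hcm w.
have h3 : cm ^+ size w <= cm ^+ (q * k.+1) by apply: ler_wiXn2l => //; apply: ltnW.
have h4 : cm ^+ (q * k.+1) <= 2%:R ^- k.+1.
  rewrite exprM -exprVn; apply: lerXn2r => //; rewrite nnegrE ?exprn_ge0 ?invr_ge0 ?ler0n //.
have := lt_le_trans h1 (le_trans h2 (le_trans h3 h4)).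
by rewrite ltxx.
Qed.

Theorem lemma4p4 (R : realType) (d : nat) (I : finType)
    (c : I -> R) (M : I -> 'M[R]_d) (b : I -> 'cV[R]_d)
    (hI : (0 < #|I|)%N)
    (hc : forall i, 0 < c i < 1)
    (hM : forall i, orthogonal_mx (M i))
    (hcase : d = 1%N \/ d = 2%N \/ (forall i j, M i *m M j = M j *m M i)) :
  limn_esup (fun k : nat =>
     (((num_maps_level c M k)%:R : R) `^ (k%:R)^-1)%:E) = 1%:E.
Proof.
have [Q hQ] := key_all hM hcase.
have [cm [hcmb hcm]] := cmax hc.
have [cm0 cm1] := andP hcmb.
have [q [hq q0]] := geo_le hcmb.
set m := #|{: I * bool}|.
have m0 : (0 < m)%N by rewrite /m card_prod card_bool muln_gt0 hI.
have hsz := size_level hc hcm cm0 (ltW cm1) hq.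
have Nle : forall k, (num_maps_level c M k <= (q.+1 * k.+1) ^ m)%N.
  move=> k; apply: leq_trans (geq_card_fset_set (count_le c hQ (@hsz k))) _.
  by rewrite leq_exp2r //; nia.
have Nge : forall n, exists k, (n <= k)%N /\ (1 <= num_maps_level c M k)%N.
  move=> n; case/card_gt0P: hI => i0 _.
  have [ci0 ci1] := andP (hc i0).
  set j := (q * n.+1)%N.
  have x0 : 0 < c i0 ^+ j by rewrite exprn_gt0.
  have xle : c i0 ^+ j <= 2%:R ^- n.+1.
    apply: (@le_trans _ _ (cm ^+ j)).
      by apply: lerXn2r; rewrite ?nnegrE ?(ltW ci0) ?hcm.
    rewrite /j exprM -exprVn; apply: lerXn2r => //; rewrite nnegrE ?exprn_ge0 ?invr_ge0 ?ler0n //.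
  have [k [hk [h1 h2]]] := level_exists x0 xle.
  exists k; split; first by apply: ltnW.
  set A := word_map c M @` words_level c k.
  have wA : A (word_map c M (nseq j i0)).
    exists (nseq j i0) => //; split.
      by rewrite -size_eq0 size_nseq /j muln_eq0 negb_or -!lt0n q0.
    by rewrite ratio_nseq.
  have finA : finite_set A.
    by apply/finite_set_leP; eexists; apply: (count_le c hQ (@hsz k)).
  rewrite lt0n; apply/eqP => h0.
  have := fset_set_set0 finA (cardfs0_eq h0).
  by move=> hA; move: wA; rewrite hA.
rewrite limn_esup_lim; apply/eqP; rewrite eq_le; apply/andP; split.
  apply/lee_addgt0Pr => e e0.
  have [K hK] := @poly_exp R q.+1 m e (ltn0Sn q) e0.
  apply: lime_le; first exact: is_cvg_esups.
  exists K.+1 => // n /= hn.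
  apply: ge_ereal_sup => _ [k /= hk <-].
  rewrite -EFinD lee_fin; apply: root_le => //.
    by apply: leq_trans hk; apply: leq_trans hn.
  apply: le_trans (hK k _); first by rewrite ler_nat.
  by apply: leq_trans hk; apply: leq_trans hn.
apply: lime_ge; first exact: is_cvg_esups.
apply: nearW => n.
have [k [hk hN]] := Nge n.
apply: le_trans (ereal_sup_ubound _); last by exists k.
by rewrite lee_fin root_ge1.
Qed.
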